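(* Let $\bar X\in\mathbb{R}_{\ge0}^{m\times n}$, $u\in\mathbb{R}^m$, $v\in\mathbb{R}^n$, and let $(p,q)$ be the row and column sums of any realization $Y$ of the biproportional Poisson model with base matrix $\bar X$ and parameters $(u,v)$. Then IPF (with zero-marginal handling) on $(\bar X,p,q)$ converges, i.e. the scaled matrices converge to a matrix with row sums $p$ and column sums $q$.
   Context: Biproportional Poisson model: entries $Y_{ij}$ independent with $Y_{ij}\sim\mathrm{Poisson}(e^{u_i}\bar X_{ij}e^{-v_j})$ if $\bar X_{ij}>0$ and $Y_{ij}=0$ otherwise; $p_i=\sum_jY_{ij}$, $q_j=\sum_iY_{ij}$. IPF with zero-marginal handling on $(X,p,q)$ with $\sum_ip_i=\sum_jq_j$: start with $d^0=\mathbf 1_m$, $d^1=\mathbf 1_n$; alternately update rows (for each $i$: $d^0_i\leftarrow0$ if $p_i=0$, else $d^0_i\leftarrow p_i/\sum_jX_{ij}d^1_j$) and columns (for each $j$: $d^1_j\leftarrow0$ if $q_j=0$, else $d^1_j\leftarrow q_j/\sum_iX_{ij}d^0_i$); after each update the scaled matrix is $\mathrm{diag}(d^0)X\mathrm{diag}(d^1)$. *)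

(* Defs.v *)
From HB Require Import structures.
From mathcomp Require Import all_boot all_order all_algebra.
From mathcomp Require Import all_classical all_reals all_analysis.
Set Implicit Arguments. Unset Strict Implicit. Unset Printing Implicit Defensive.
Import Order.TTheory GRing.Theory Num.Theory.
Local Open Scope ring_scope.

Section Defs.
Variable R : realType.

Definition poisson_pmf (lam : R) (k : nat) : R :=
  lam ^+ k * expR (- lam) / (k`!)%:R.

Definition bp_rate m n (X : 'M[R]_(m, n)) (u : 'I_m -> R) (v : 'I_n -> R)
  (i : 'I_m) (j : 'I_n) : R := expR (u i) * X i j * expR (- v j).

(* Y is a realization of the biproportional Poisson model with base matrix X
   and parameters (u,v): each entry lies in the support of its law, i.e.
   Y_ij has positive Poisson(rate) probability if X_ij > 0, and Y_ij = 0
   otherwise. *)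
Definition bp_realization m n (X : 'M[R]_(m, n)) (u : 'I_m -> R)
  (v : 'I_n -> R) (Y : 'I_m -> 'I_n -> nat) : Prop :=
  forall i j, (0 < X i j -> 0 < poisson_pmf (bp_rate X u v i j) (Y i j)) /\
              (X i j = 0 -> Y i j = 0%N).

Definition row_sums m n (Y : 'I_m -> 'I_n -> nat) (i : 'I_m) : R :=
  (\sum_(j < n) Y i j)%N%:R.
Definition col_sums m n (Y : 'I_m -> 'I_n -> nat) (j : 'I_n) : R :=
  (\sum_(i < m) Y i j)%N%:R.

Definition ipf_row m n (X : 'M[R]_(m, n)) (p : 'I_m -> R) (d1 : 'I_n -> R)
  : 'I_m -> R :=
  fun i => if p i == 0 then 0 else p i / \sum_(j < n) X i j * d1 j.
Definition ipf_col m n (X : 'M[R]_(m, n)) (q : 'I_n -> R) (d0 : 'I_m -> R)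
  : 'I_n -> R :=
  fun j => if q j == 0 then 0 else q j / \sum_(i < m) X i j * d0 i.

(* State (d0, d1) after t single updates (t = 0: initial all-ones;
   odd t: just after a row update; even t > 0: just after a column update). *)
Fixpoint ipf_state m n (X : 'M[R]_(m, n)) p q (t : nat)
  : ('I_m -> R) * ('I_n -> R) :=
  match t with
  | 0%N => (fun _ => 1, fun _ => 1)
  | t'.+1 =>
      let: (d0, d1) := ipf_state X p q t' in
      if odd t then (ipf_row X p d1, d1) else (d0, ipf_col X q d0)
  end.

Definition ipf_mat m n (X : 'M[R]_(m, n)) p q (t : nat) : 'M[R]_(m, n) :=
  let: (d0, d1) := ipf_state X p q t in
  \matrix_(i, j) (d0 i * X i j * d1 j).

End Defs.

(* Main.v *)
Require Import Defs.
From HB Require Import structures.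
From mathcomp Require Import all_boot all_order all_algebra.
From mathcomp Require Import all_classical all_reals all_analysis.
From mathcomp Require Import ring lra.
Import Order.TTheory GRing.Theory Num.Theory.
Import numFieldNormedType.Exports.
Local Open Scope classical_set_scope.
Local Open Scope ring_scope.

Lemma term_le_sum (R : realType) (I : finType) (F : I -> R) i0 :
  (forall i, 0 <= F i) -> F i0 <= \sum_i F i.
Proof. by move=> F0; rewrite (bigD1 i0) //= lerDl sumr_ge0. Qed.

Lemma sum_gt0_term (R : realType) (I : finType) (F : I -> R) i0 :
  (forall i, 0 <= F i) -> 0 < F i0 -> 0 < \sum_i F i.
Proof. by move=> F0 Fp; exact: lt_le_trans Fp (@term_le_sum R I F i0 F0). Qed.

Lemma K1 (R : realType) (a b : R) : 0 <= a -> 0 <= b -> (0 < a -> 0 < b) ->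
  a - b + (Num.sqrt a - Num.sqrt b) ^+ 2 <= a * (ln a - ln b).
Proof.
move=> a0 b0 ab.
have [->|an0] := eqVneq a 0.
  by rewrite sqrtr0 !sub0r sqrrN sqr_sqrtr // mul0r addNr.
have ap : 0 < a by rewrite lt_def an0.
have bp := ab ap.
set sa := Num.sqrt a; set sb := Num.sqrt b.
have sap : 0 < sa by rewrite sqrtr_gt0.
have sbp : 0 < sb by rewrite sqrtr_gt0.
have ea : a = sa * sa by rewrite -expr2 sqr_sqrtr.
have eb : b = sb * sb by rewrite -expr2 sqr_sqrtr.
have la : ln a = ln sa + ln sa by rewrite ea lnM // posrE.
have lb : ln b = ln sb + ln sb by rewrite eb lnM // posrE.
have hl : ln (sb / sa) <= sb / sa - 1.
  have := @le_ln1Dx R (sb / sa - 1).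
  rewrite addrCA subrr addr0; apply.
  by rewrite ltrBrDr addNr divr_gt0.
have ed : ln (sb / sa) = ln sb - ln sa by rewrite ln_div // posrE.
rewrite ed in hl.
have : sa * sa * (ln sb - ln sa) <= sa * sa * (sb / sa - 1).
  by rewrite ler_pM2l ?mulr_gt0.
have -> : sa * sa * (sb / sa - 1) = sa * sb - sa * sa.
  by field; rewrite gt_eqF.
rewrite la lb ea eb => h.
have -> : sa * sa * (ln sa + ln sa - (ln sb + ln sb)) = -(2 * (sa * sa * (ln sb - ln sa))).
  by ring.
set K := sa * sa * (ln sb - ln sa) in h *.
idtac.
nra.
Qed.

Lemma K2 (R : realType) (I : finType) (a b : I -> R) :
  (forall i, 0 <= a i) -> (forall i, 0 <= b i) -> (forall i, 0 < a i -> 0 < b i) ->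
  \sum_i (a i - b i) + \sum_i (Num.sqrt (a i) - Num.sqrt (b i)) ^+ 2
    <= \sum_i a i * (ln (a i) - ln (b i)).
Proof. by move=> a0 b0 ab; rewrite -big_split /=; apply: ler_sum => i _; apply: K1; [exact: a0|exact: b0|exact: ab]. Qed.

Lemma G1 (R : realType) (I : finType) (a d r : I -> R) :
  (forall i, 0 <= a i) -> (forall i, 0 < a i -> 0 < d i /\ 0 < r i) ->
  \sum_i a i * ln (if a i == 0 then 0 else a i / r i) - \sum_i a i * ln (d i)
  = \sum_i a i * (ln (a i) - ln (d i * r i)).
Proof.
move=> a0 h; rewrite -sumrB; apply: eq_bigr => i _.
have [->|an0] := eqVneq (a i) 0; first by rewrite !mul0r subrr.
have ap : 0 < a i by rewrite lt_def an0 a0.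
have [dp rp] := h i ap.
rewrite ln_div ?posrE // lnM ?posrE //; ring.
Qed.

Lemma cvg_sumR (R : realType) (I : finType) (F : I -> nat -> R) (l : I -> R) :
  (forall i, F i @ \oo --> l i) -> (fun t => \sum_i F i t) @ \oo --> \sum_i l i.
Proof. by move=> h; apply: (cvg_big add_continuous) => // i _; apply: h. Qed.

Lemma incr_ge (f : nat -> nat) : increasing_seq f -> forall k, (k <= f k)%N.
Proof.
move=> hf; elim => // k IH.
have : (f k < f k.+1)%N.
  rewrite ltnNge; apply/negP => h.
  have H : (f k.+1 <= f k)%N = (k.+1 <= k)%N := hf k.+1 k.
  by rewrite h ltnn in H.
by apply: leq_ltn_trans.
Qed.

Lemma cvg_subseqR (R : realType) (u : nat -> R) (l : R) (f : nat -> nat) :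
  increasing_seq f -> u @ \oo --> l -> (u \o f) @ \oo --> l.
Proof.
move=> hf hu; apply: cvg_comp hu => A [N _ HA]; exists N => // k /= Nk.
apply: HA => /=; exact: (@leq_trans k N (f k) Nk (@incr_ge f hf k)).
Qed.

Lemma incr_comp (f g : nat -> nat) : increasing_seq f -> increasing_seq g ->
  increasing_seq (f \o g).
Proof.
move=> hf hg a b /=.
have H1 : (f (g a) <= f (g b))%N = (g a <= g b)%N := hf (g a) (g b).
have H2 : (g a <= g b)%N = (a <= b)%N := hg a b.
exact: (etrans H1 H2).
Qed.

Lemma sqcvg (R : realType) (f : nat -> R) (c : R) : (forall s, 0 <= f s) -> 0 <= c ->
  (fun s => (Num.sqrt c - Num.sqrt (f s)) ^+ 2) @ \oo --> 0 -> f @ \oo --> c.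
Proof.
move=> f0 c0 h.
have h1 : (fun s => Num.sqrt c - Num.sqrt (f s)) @ \oo --> 0.
  apply: norm_cvg0.
  have E : (fun s => `|Num.sqrt c - Num.sqrt (f s)|) =
     Num.sqrt \o (fun s => (Num.sqrt c - Num.sqrt (f s)) ^+ 2).
    by apply/funext => s /=; rewrite sqrtr_sqr.
  have := cvg_comp _ _ h (@sqrt_continuous R 0).
  by rewrite sqrtr0 -E.
have h2 : (fun s => Num.sqrt (f s)) @ \oo --> Num.sqrt c.
  have := cvgB (cvg_cst (Num.sqrt c)) h1; rewrite subr0.
  have -> : (fun s => Num.sqrt c) - (fun s => Num.sqrt c - Num.sqrt (f s)) =
     (fun s => Num.sqrt (f s)).
    by apply/funext => s /=; rewrite opprB addrC subrK.
  by move=> H; apply: H; exact: _.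
have := cvgM h2 h2; rewrite -expr2 sqr_sqrtr //.
have -> : (fun s => Num.sqrt (f s)) \* (fun s => Num.sqrt (f s)) = f.
  by apply/funext => s /=; rewrite -expr2 sqr_sqrtr.
by move=> H; apply: H; exact: _.
Qed.

Lemma bnd_fun (R : realType) (u : nat -> R) (B : R) : (forall s, `|u s| <= B) -> bounded_fun u.
Proof.
move=> hB; rewrite /bounded_near; near=> M => s _ /=.
apply: le_trans (hB s) _; near: M; apply: nbhs_pinfty_ge; exact: num_real.
Unshelve. all: by end_near.
Qed.

Lemma multiBW (R : realType) (K : finType) (x : K -> nat -> R) :
  (forall k, bounded_fun (x k)) ->
  exists2 f : nat -> nat, increasing_seq f & forall k, cvgn (x k \o f).
Proof.
move=> hb.
suff : forall s : seq K, exists2 f : nat -> nat, increasing_seq f &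
    forall k, k \in s -> cvgn (x k \o f).
  by case/(_ (enum K)) => f hf hk; exists f => // k; apply: hk; rewrite mem_enum.
elim => [|k s [f hf hk]]; first by exists id.
have [|g hg cg] := @bolzano_weierstrass R (x k \o f).
  move: (hb k); rewrite /bounded_near => hbk.
  apply: filterS hbk => M /= HM s' _; exact: HM.
exists (f \o g); first exact: incr_comp.
move=> k'; rewrite inE => /orP [/eqP ->|hk'].
  exact: cg.
have /cvg_ex [l hl] := hk k' hk'.
apply/cvg_ex; exists l; exact: cvg_subseqR hg hl.
Qed.

Lemma uniqR (R : realType) (u : nat -> R) (a b : R) :
  u @ \oo --> a -> u @ \oo --> b -> a = b.
Proof.
move=> ha hb; rewrite -(cvg_lim (@Rhausdorff R) ha) -(cvg_lim (@Rhausdorff R) hb).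
by [].
Qed.

Lemma sq0 (R : realType) (g h : nat -> R) :
  (forall s, 0 <= g s <= h s) -> h @ \oo --> 0 -> g @ \oo --> 0.
Proof.
move=> hg hh; apply: (@squeeze_cvgr _ _ _ _ (fun=> 0) h g); last exact: hh.
  by near=> s; apply: hg.
exact: cvg_cst.
Unshelve. all: by end_near.
Qed.

Lemma incr_succ : increasing_seq succn.
Proof. by move=> a b. Qed.

Section IPF.
Variable R : realType.
Variables (m n : nat) (X : 'M[R]_(m,n)) (u : 'I_m -> R) (v : 'I_n -> R)
  (Y : 'I_m -> 'I_n -> nat).
Hypothesis X0 : forall i j, 0 <= X i j.
Hypothesis HY : bp_realization X u v Y.

Local Notation p := (row_sums R Y).
Local Notation q := (col_sums R Y).

Definition Yr i j : R := (Y i j)%:R.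

Lemma pE i : p i = \sum_j Yr i j.
Proof. by rewrite /row_sums natr_sum. Qed.
Lemma qE j : q j = \sum_i Yr i j.
Proof. by rewrite /col_sums natr_sum. Qed.
Lemma Yr_ge0 i j : 0 <= Yr i j. Proof. by rewrite /Yr ler0n. Qed.
Lemma p_ge0 i : 0 <= p i. Proof. by rewrite /row_sums ler0n. Qed.
Lemma q_ge0 j : 0 <= q j. Proof. by rewrite /col_sums ler0n. Qed.

Lemma Yr_X i j : 0 < Yr i j -> 0 < X i j.
Proof.
move=> h; rewrite lt_def X0 andbT; apply/eqP => hX.
by move: h; rewrite /Yr (proj2 (HY i j) hX) ltxx.
Qed.

Lemma p_wit i : 0 < p i -> exists j, 0 < X i j /\ 0 < q j.
Proof.
move=> hp; have [[j hj]|nj] := pselect (exists j, 0 < Yr i j).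
  exists j; split; first exact: Yr_X.
  by rewrite qE; apply: (@sum_gt0_term _ _ _ i) => // k; apply: Yr_ge0.
move: hp; rewrite pE big1 ?ltxx // => j _.
apply/eqP; rewrite eq_le Yr_ge0 andbT leNgt; apply/negP => h; apply: nj; by exists j.
Qed.

Lemma q_wit j : 0 < q j -> exists i, 0 < X i j /\ 0 < p i.
Proof.
move=> hq; have [[i hi]|ni] := pselect (exists i, 0 < Yr i j).
  exists i; split; first exact: Yr_X.
  by rewrite pE; apply: (@sum_gt0_term _ _ _ j) => // k; apply: Yr_ge0.
move: hq; rewrite qE big1 ?ltxx // => i _.
apply/eqP; rewrite eq_le Yr_ge0 andbT leNgt; apply/negP => h; apply: ni; by exists i.
Qed.

Definition S := \sum_i p i.
Lemma Sq : \sum_j q j = S.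
Proof.
rewrite /S; under eq_bigr do rewrite qE; under [RHS]eq_bigr do rewrite pE.
by rewrite exchange_big.
Qed.

Definition d0 t := (ipf_state X p q t).1.
Definition d1 t := (ipf_state X p q t).2.

Lemma state_odd k : odd k.+1 -> d0 k.+1 = ipf_row X p (d1 k) /\ d1 k.+1 = d1 k.
Proof. by rewrite /d0 /d1 /= => ->; case: (ipf_state X p q k). Qed.
Lemma state_even k : ~~ odd k.+1 -> d0 k.+1 = d0 k /\ d1 k.+1 = ipf_col X q (d0 k).
Proof. by rewrite /d0 /d1 /= => /negbTE ->; case: (ipf_state X p q k). Qed.

Definition Mt t i j := d0 t i * X i j * d1 t j.
Lemma MtE t i j : ipf_mat X p q t i j = Mt t i j.
Proof. by rewrite /ipf_mat /Mt /d0 /d1; case: (ipf_state X p q t) => a b; rewrite mxE. Qed.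

Definition rr t i := \sum_j X i j * d1 t j.
Definition cc t j := \sum_i X i j * d0 t i.

Definition Inv t := [/\ (forall i, 0 <= d0 t i), (forall j, 0 <= d1 t j),
  (forall i, 0 < p i -> 0 < d0 t i) & (forall j, 0 < q j -> 0 < d1 t j)].

Lemma rr_ge0 t : Inv t -> forall i, 0 <= rr t i.
Proof. by case=> _ h1 _ _ i; apply: sumr_ge0 => j _; rewrite mulr_ge0. Qed.
Lemma cc_ge0 t : Inv t -> forall j, 0 <= cc t j.
Proof. by case=> h0 _ _ _ j; apply: sumr_ge0 => i _; rewrite mulr_ge0. Qed.
Lemma rr_gt0 t : Inv t -> forall i, 0 < p i -> 0 < rr t i.
Proof.
case=> _ h1 _ h3 i /p_wit [j [hx hq]].
apply: (@sum_gt0_term _ _ _ j); last by rewrite mulr_gt0 // h3.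
by move=> k; rewrite mulr_ge0.
Qed.
Lemma cc_gt0 t : Inv t -> forall j, 0 < q j -> 0 < cc t j.
Proof.
case=> h0 _ h2 _ j /q_wit [i [hx hp]].
apply: (@sum_gt0_term _ _ _ i); last by rewrite mulr_gt0 // h2.
by move=> k; rewrite mulr_ge0.
Qed.

Lemma Inv_all t : Inv t.
Proof.
elim: t => [|k IH].
  by split => *; rewrite /d0 /d1 /= ?ler01 ?ltr01.
have [hr|hc] := boolP (odd k.+1).
  have [e0 e1] := state_odd _ hr; rewrite /Inv e0 e1.
  case: (IH) => h0 h1 h2 h3; split => // i; rewrite /ipf_row.
    case: ifP => // _; rewrite divr_ge0 ?p_ge0 //; exact: rr_ge0.
  move=> hp; rewrite (gt_eqF hp) divr_gt0 //; exact: rr_gt0.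
have [e0 e1] := state_even _ hc; rewrite /Inv e0 e1.
case: (IH) => h0 h1 h2 h3; split => // j; rewrite /ipf_col.
  case: ifP => // _; rewrite divr_ge0 ?q_ge0 //; exact: cc_ge0.
move=> hq; rewrite (gt_eqF hq) divr_gt0 //; exact: cc_gt0.
Qed.

Definition Rs t i := \sum_j Mt t i j.
Definition Cs t j := \sum_i Mt t i j.

Lemma RsE t i : Rs t i = d0 t i * rr t i.
Proof. by rewrite /Rs /rr mulr_sumr; apply: eq_bigr => j _; rewrite /Mt mulrA. Qed.
Lemma CsE t j : Cs t j = d1 t j * cc t j.
Proof.
by rewrite /Cs /cc mulr_sumr; apply: eq_bigr => i _; rewrite /Mt; ring.
Qed.

Lemma Mt_ge0 t i j : 0 <= Mt t i j.
Proof. by case: (Inv_all t) => h0 h1 _ _; rewrite /Mt; apply: mulr_ge0; [apply: mulr_ge0|]. Qed.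

Lemma Rs_odd k i : odd k.+1 -> Rs k.+1 i = p i.
Proof.
move=> hr; rewrite RsE; have [e0 e1] := state_odd _ hr.
rewrite /rr e0 e1 /ipf_row -/(rr k i).
have [->|hp] := eqVneq (p i) 0; first by rewrite mul0r.
have hp' : 0 < p i by rewrite lt_def hp p_ge0.
by rewrite divfK // gt_eqF // rr_gt0 //; apply: Inv_all.
Qed.

Lemma Cs_even k j : ~~ odd k.+1 -> Cs k.+1 j = q j.
Proof.
move=> hc; rewrite CsE; have [e0 e1] := state_even _ hc.
rewrite /cc e0 e1 /ipf_col -/(cc k j).
have [->|hq] := eqVneq (q j) 0; first by rewrite mul0r.
have hq' : 0 < q j by rewrite lt_def hq q_ge0.
by rewrite divfK // gt_eqF // cc_gt0 //; apply: Inv_all.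
Qed.

Lemma sumRsCs t : \sum_i Rs t i = \sum_j Cs t j.
Proof. by rewrite /Rs /Cs exchange_big. Qed.

Lemma mass t : (1 <= t)%N -> \sum_i Rs t i = S.
Proof.
case: t => // k _; have [hr|hc] := boolP (odd k.+1).
  by rewrite /S; apply: eq_bigr => i _; rewrite Rs_odd.
by rewrite sumRsCs -Sq; apply: eq_bigr => j _; rewrite Cs_even.
Qed.


Definition Psi t := \sum_i p i * ln (d0 t i) + \sum_j q j * ln (d1 t j).

Lemma Rs_ge0 t i : 0 <= Rs t i.
Proof. by apply: sumr_ge0 => j _; apply: Mt_ge0. Qed.
Lemma Cs_ge0 t j : 0 <= Cs t j.
Proof. by apply: sumr_ge0 => i _; apply: Mt_ge0. Qed.

Lemma inc_row k : odd k.+1 -> (1 <= k)%N ->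
  \sum_i (Num.sqrt (p i) - Num.sqrt (Rs k i)) ^+ 2 <= Psi k.+1 - Psi k.
Proof.
move=> hr k1; have [e0 e1] := state_odd _ hr.
have [h0 h1 h2 h3] := Inv_all k.
rewrite /Psi e0 e1.
have -> : forall x y z : R, (x + z) - (y + z) = x - y by move=> *; ring.
have -> : \sum_i p i * ln (ipf_row X p (d1 k) i) - \sum_i p i * ln (d0 k i)
   = \sum_i p i * (ln (p i) - ln (Rs k i)).
  rewrite (@G1 R _ p (d0 k) (rr k)); first by apply: eq_bigr => i _; rewrite RsE.
    exact: p_ge0.
  by move=> i hp; split; [apply: h2|apply: rr_gt0].
apply: le_trans (@K2 R _ p (Rs k) p_ge0 (Rs_ge0 k) _).
  by rewrite sumrB mass // /S subrr add0r.
move=> i hp; rewrite RsE mulr_gt0 //; [exact: h2|exact: rr_gt0].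
Qed.

Lemma inc_col k : ~~ odd k.+1 -> (1 <= k)%N ->
  \sum_j (Num.sqrt (q j) - Num.sqrt (Cs k j)) ^+ 2 <= Psi k.+1 - Psi k.
Proof.
move=> hc k1; have [e0 e1] := state_even _ hc.
have [h0 h1 h2 h3] := Inv_all k.
rewrite /Psi e0 e1.
have -> : forall x y z : R, (z + x) - (z + y) = x - y by move=> *; ring.
have -> : \sum_j q j * ln (ipf_col X q (d0 k) j) - \sum_j q j * ln (d1 k j)
   = \sum_j q j * (ln (q j) - ln (Cs k j)).
  rewrite (@G1 R _ q (d1 k) (cc k)); first by apply: eq_bigr => j _; rewrite CsE.
    exact: q_ge0.
  by move=> j hq; split; [apply: h3|apply: cc_gt0].
apply: le_trans (@K2 R _ q (Cs k) q_ge0 (Cs_ge0 k) _).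
  by rewrite sumrB -sumRsCs mass // Sq subrr add0r.
move=> j hq; rewrite CsE mulr_gt0 //; [exact: h3|exact: cc_gt0].
Qed.

Definition feas (Z : 'I_m -> 'I_n -> R) :=
  [/\ forall i j, 0 <= Z i j, forall i j, 0 < Z i j -> 0 < X i j,
      forall i, \sum_j Z i j = p i & forall j, \sum_i Z i j = q j].

Definition Phi t (Z : 'I_m -> 'I_n -> R) :=
  \sum_i \sum_j Z i j * (ln (Z i j) - ln (Mt t i j)).
Definition Cf (Z : 'I_m -> 'I_n -> R) :=
  \sum_i \sum_j Z i j * (ln (Z i j) - ln (X i j)).

Lemma feas_pos Z i j : feas Z -> 0 < Z i j -> [/\ 0 < X i j, 0 < p i & 0 < q j].
Proof.
case=> Z0 ZX Zr Zc hz; split; first exact: ZX.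
  by rewrite -Zr; apply: (@sum_gt0_term _ _ _ j) => // k; apply: Z0.
by rewrite -Zc; apply: (@sum_gt0_term _ _ _ i) => // k; apply: Z0.
Qed.

Lemma Mt_gt0 t i j : 0 < X i j -> 0 < p i -> 0 < q j -> 0 < Mt t i j.
Proof.
have [h0 h1 h2 h3] := Inv_all t => hx hp hq.
by rewrite /Mt !mulr_gt0 // ?h2 ?h3.
Qed.

Lemma feasY : feas Yr.
Proof.
split; [exact: Yr_ge0|exact: Yr_X|by move=> i; rewrite pE|by move=> j; rewrite qE].
Qed.

Lemma PhiC t Z : feas Z -> Phi t Z = Cf Z - Psi t.
Proof.
move=> hZ; have [Z0 ZX Zr Zc] := hZ.
have [h0 h1 h2 h3] := Inv_all t.
have step i j : Z i j * (ln (Z i j) - ln (Mt t i j)) =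
    Z i j * (ln (Z i j) - ln (X i j)) - Z i j * ln (d0 t i) - Z i j * ln (d1 t j).
  have [->|zn0] := eqVneq (Z i j) 0; first by rewrite !mul0r !subrr.
  have zp : 0 < Z i j by rewrite lt_def zn0 Z0.
  have [hx hp hq] := feas_pos _ _ _ hZ zp.
  have d0p := h2 _ hp; have d1p := h3 _ hq.
  rewrite /Mt lnM ?posrE ?mulr_gt0 // lnM ?posrE //; ring.
have E : Phi t Z = Cf Z - \sum_i \sum_j Z i j * ln (d0 t i)
                        - \sum_i \sum_j Z i j * ln (d1 t j).
  rewrite /Phi /Cf -!sumrB; apply: eq_bigr => i _; rewrite -!sumrB.
  by apply: eq_bigr => j _; apply: step.
rewrite E /Psi opprD addrA; congr (_ - _ - _).
  by apply: eq_bigr => i _; rewrite -mulr_suml Zr.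
by rewrite exchange_big; apply: eq_bigr => j _; rewrite -mulr_suml Zc.
Qed.

Lemma PhiH t Z : feas Z -> (1 <= t)%N ->
  \sum_i \sum_j (Num.sqrt (Z i j) - Num.sqrt (Mt t i j)) ^+ 2 <= Phi t Z.
Proof.
move=> hZ t1; have [Z0 ZX Zr Zc] := hZ.
have h i : \sum_j (Z i j - Mt t i j) + \sum_j (Num.sqrt (Z i j) - Num.sqrt (Mt t i j)) ^+ 2
    <= \sum_j Z i j * (ln (Z i j) - ln (Mt t i j)).
  apply: K2 => // j; first exact: Mt_ge0.
  by move=> zp; have [hx hp hq] := feas_pos _ _ _ hZ zp; apply: Mt_gt0.
have H : \sum_i (\sum_j (Z i j - Mt t i j) +
   \sum_j (Num.sqrt (Z i j) - Num.sqrt (Mt t i j)) ^+ 2) <= Phi t Z.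
  by apply: ler_sum => i _; exact: h i.
apply: le_trans H; rewrite big_split /=.
have -> : \sum_i \sum_j (Z i j - Mt t i j) = 0.
  under eq_bigr do rewrite sumrB Zr.
  by rewrite sumrB mass // /S subrr.
by rewrite add0r.
Qed.


Definition PsiS s := Psi s.+1.

Lemma sq_sum_ge0 (I : finType) (F : I -> R) : 0 <= \sum_i F i ^+ 2.
Proof. by apply: sumr_ge0 => i _; apply: sqr_ge0. Qed.

Lemma inc_ge_terms k : (1 <= k)%N ->
  (forall i, (Num.sqrt (p i) - Num.sqrt (Rs k i)) ^+ 2 <= Psi k.+1 - Psi k) /\
  (forall j, (Num.sqrt (q j) - Num.sqrt (Cs k j)) ^+ 2 <= Psi k.+1 - Psi k).
Proof.
move=> k1; case: k k1 => // k _.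
have [hr|hc] := boolP (odd k.+2).
  have hI := inc_row _ hr (isT : (1 <= k.+1)%N).
  have hc : ~~ odd k.+1 by move: hr => /=; rewrite negbK.
  split => [i|j].
    apply: le_trans hI; apply: (@term_le_sum _ _ (fun i => _ ^+ 2) i) => i'.
    exact: sqr_ge0.
  rewrite Cs_even // subrr expr0n /=; apply: le_trans hI; exact: sq_sum_ge0.
have hI := inc_col _ hc (isT : (1 <= k.+1)%N).
have hr : odd k.+1 by move: hc => /=; rewrite negbK.
split => [i|j].
  rewrite Rs_odd // subrr expr0n /=; apply: le_trans hI; exact: sq_sum_ge0.
apply: le_trans hI; apply: (@term_le_sum _ _ (fun j => _ ^+ 2) j) => j'.
exact: sqr_ge0.
Qed.

Lemma inc_ge0 k : (1 <= k)%N -> 0 <= Psi k.+1 - Psi k.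
Proof.
move=> k1; have [hr|hc] := boolP (odd k.+1).
  exact: le_trans (sq_sum_ge0 _ _) (inc_row _ hr k1).
exact: le_trans (sq_sum_ge0 _ _) (inc_col _ hc k1).
Qed.

Lemma PsiS_nd : nondecreasing_seq PsiS.
Proof. by apply/nondecreasing_seqP => s; rewrite /PsiS -subr_ge0; apply: inc_ge0. Qed.

Lemma Psi_ub t : (1 <= t)%N -> Psi t <= Cf Yr.
Proof.
move=> t1; have := PhiH t Yr feasY t1; rewrite PhiC; last exact: feasY.
move=> h; rewrite -subr_ge0; apply: le_trans h.
by apply: sumr_ge0 => i _; apply: sq_sum_ge0.
Qed.

Lemma main_sec : exists L : 'M[R]_(m, n),
    (forall i j, (fun t => Mt t i j) @ \oo --> L i j) /\
    (forall i, \sum_(j < n) L i j = p i) /\ (forall j, \sum_(i < m) L i j = q j).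
Proof.
have cP : cvgn PsiS.
  apply: nondecreasing_is_cvgn; first exact: PsiS_nd.
  by exists (Cf Yr) => _ [s _ <-]; apply: Psi_ub.
have /cvg_ex [lP hP] := cP.
pose dinc := fun s => PsiS s.+1 - PsiS s.
have hd : dinc @ \oo --> 0.
  have h1 : (PsiS \o succn) @ \oo --> lP := @cvg_subseqR _ _ _ _ incr_succ hP.
  have := cvgB h1 hP; rewrite subrr => H; apply: H.
have hRs : forall i, (fun s => Rs s.+1 i) @ \oo --> p i.
  move=> i; apply: sqcvg; [move=> s; exact: Rs_ge0|exact: p_ge0|].
  apply: (@sq0 _ _ dinc) => // s; rewrite sqr_ge0 /=.
  exact: ((inc_ge_terms s.+1 isT).1 i).
have hCs : forall j, (fun s => Cs s.+1 j) @ \oo --> q j.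
  move=> j; apply: sqcvg; [move=> s; exact: Cs_ge0|exact: q_ge0|].
  apply: (@sq0 _ _ dinc) => // s; rewrite sqr_ge0 /=.
  exact: ((inc_ge_terms s.+1 isT).2 j).
pose x := fun (k : 'I_m * 'I_n) s => Mt s.+1 k.1 k.2.
have [phi hphi cx] : exists2 f : nat -> nat, increasing_seq f & forall k, cvgn (x k \o f).
  apply: multiBW => k; apply: (@bnd_fun R _ S) => s; rewrite ger0_norm; last exact: Mt_ge0.
  rewrite /x; apply: (@le_trans _ _ (Rs s.+1 k.1)).
    by apply: (@term_le_sum _ _ (fun j => Mt s.+1 k.1 j)) => j; exact: Mt_ge0.
  rewrite -(@mass s.+1) //.
  by apply: (@term_le_sum _ _ (fun i => Rs s.+1 i)) => i; exact: Rs_ge0.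
pose L := \matrix_(i, j) lim ((x (i, j) \o phi) @ \oo).
have hL : forall i j, (fun s => Mt (phi s).+1 i j) @ \oo --> L i j.
  by move=> i j; rewrite mxE; exact: (cx (i, j)).
have L0 : forall i j, 0 <= L i j.
  move=> i j; rewrite mxE; apply: limr_ge; first exact: (cx (i, j)).
  by near=> s; apply: Mt_ge0.
have LX : forall i j, 0 < L i j -> 0 < X i j.
  move=> i j hl; rewrite lt_def X0 andbT; apply/eqP => hx.
  have : (fun s => Mt (phi s).+1 i j) @ \oo --> 0.
    have -> : (fun s => Mt (phi s).+1 i j) = fun _ => 0.
      by apply/funext => s; rewrite /Mt hx mulr0 mul0r.
    exact: cvg_cst.
  by move/(@uniqR _ _ _ _ (hL i j)) => e; rewrite e ltxx in hl.
have Lr : forall i, \sum_j L i j = p i.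
  move=> i; apply: (@uniqR _ (fun s => Rs (phi s).+1 i)).
    by apply: cvg_sumR => j; exact: hL.
  exact: (@cvg_subseqR _ _ _ _ hphi (hRs i)).
have Lc : forall j, \sum_i L i j = q j.
  move=> j; apply: (@uniqR _ (fun s => Cs (phi s).+1 j)).
    by apply: cvg_sumR => i; exact: (hL i j).
  exact: (@cvg_subseqR _ _ _ _ hphi (hCs j)).
have fL : feas L by split.
have hPhi : (fun s => Phi s.+1 L) @ \oo --> Cf L - lP.
  have -> : (fun s => Phi s.+1 L) = fun s => Cf L - PsiS s.
    by apply/funext => s; rewrite PhiC.
  have := cvgB (cvg_cst (Cf L)) hP => H; apply: H.
have hPhi0 : (fun s => Phi (phi s).+1 L) @ \oo --> 0.
  have -> : (0 : R) = \sum_i \sum_j L i j * (ln (L i j) - ln (L i j)).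
    by rewrite big1 // => i _; rewrite big1 // => j _; rewrite subrr mulr0.
  apply: cvg_sumR => i; apply: cvg_sumR => j.
  have [e|ln0] := eqVneq (L i j) 0.
    rewrite e mul0r.
    have -> : (fun s => 0 * (ln 0 - ln (Mt (phi s).+1 i j))) = fun _ => (0 : R).
      by apply/funext => s; rewrite mul0r.
    exact: cvg_cst.
  have lp : 0 < L i j by rewrite lt_def ln0 L0.
  have hl : (fun s => ln (Mt (phi s).+1 i j)) @ \oo --> ln (L i j).
    exact: (cvg_comp _ _ (hL i j) (continuous_ln lp)).
  have H1 : (fun s => ln (L i j) - ln (Mt (phi s).+1 i j)) @ \oo --> ln (L i j) - ln (L i j).
    exact: cvgB (cvg_cst (ln (L i j))) hl.
  have H2 : (fun s => L i j * (ln (L i j) - ln (Mt (phi s).+1 i j))) @ \oo -->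
     L i j * (ln (L i j) - ln (L i j)).
    exact: cvgM (cvg_cst (L i j)) H1.
  exact: H2.
have lPe : Cf L - lP = 0 := @uniqR _ _ _ _ (@cvg_subseqR _ _ _ _ hphi hPhi) hPhi0.
rewrite lPe in hPhi.
exists L; split; [|split]; [|exact: Lr|exact: Lc].
move=> i j.
suff H0 : (fun s => Mt s.+1 i j) @ \oo --> L i j by rewrite -(cvg_shiftS (fun t => Mt t i j)); exact: H0.
apply: sqcvg; [move=> s; exact: Mt_ge0|exact: L0|].
apply: (@sq0 _ _ (fun s => Phi s.+1 L)) => // s; rewrite sqr_ge0 /=.
apply: le_trans (PhiH s.+1 L fL isT).
apply: le_trans (@term_le_sum _ _ (fun i' => \sum_j' (Num.sqrt (L i' j') - Num.sqrt (Mt s.+1 i' j')) ^+ 2) i _).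
  by apply: (@term_le_sum _ _ (fun j' => (Num.sqrt (L i j') - Num.sqrt (Mt s.+1 i j')) ^+ 2) j) => j'; exact: sqr_ge0.
by move=> i'; exact: sq_sum_ge0.
Unshelve. all: by end_near.
Qed.

End IPF.

Theorem mainTheorem7 (R : realType) (m n : nat) (X : 'M[R]_(m, n))
  (u : 'I_m -> R) (v : 'I_n -> R) (Y : 'I_m -> 'I_n -> nat) :
  (forall i j, 0 <= X i j) ->
  bp_realization X u v Y ->
  exists L : 'M[R]_(m, n),
    (forall i j,
       (fun t => ipf_mat X (row_sums R Y) (col_sums R Y) t i j) @ \oo --> L i j) /\
    (forall i, \sum_(j < n) L i j = row_sums R Y i) /\
    (forall j, \sum_(i < m) L i j = col_sums R Y j).
Proof.
move=> X0 HY; have [L [h1 h2]] := @main_sec R m n X u v Y X0 HY.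
exists L; split => // i j.
have -> : (fun t => ipf_mat X (row_sums R Y) (col_sums R Y) t i j) = (fun t => @Mt R m n X Y t i j).
  by apply/funext => t; rewrite MtE.
exact: h1.
Qed.
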